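(* Let $a,b$ be elements of $\mathrm{Homeo}_+(I)$, or elements of $\mathrm{Homeo}_+(S^1)$ each having a fixed point, and suppose that for some integers $n_1,n_2,n_3,m_1,m_2,m_3$ with $m_1+m_2\neq m_3$ they satisfy $a^{n_1}b^{m_3}a^{n_2}=b^{m_1}a^{n_3}b^{m_2}$. If $J$ is a nontrivial interval contained in $\mathrm{Fix}(a)$, then either $J\subset\mathrm{Fix}(b)$ or $J\cap\mathrm{Fix}(b)=\emptyset$.
   Context: $\mathrm{Homeo}_+(M)$ denotes the group of orientation-preserving homeomorphisms of $M$; $I=[0,1]$; $\mathrm{Fix}(f)$ is the fixed point set of $f$. *)

(* Defs.v *)
From Stdlib Require Import Reals ZArith.
Open Scope R_scope.

Definition inI (x : R) : Prop := 0 <= x <= 1.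

(** (f, g) represents an element of Homeo_+(I): f maps I into I,
    g is its inverse on I, f is strictly increasing and continuous on I. *)
Definition is_homeo_plus_I (f g : R -> R) : Prop :=
  (forall x, inI x -> inI (f x)) /\
  (forall x, inI x -> inI (g x)) /\
  (forall x, inI x -> g (f x) = x) /\
  (forall x, inI x -> f (g x) = x) /\
  (forall x y, inI x -> inI y -> x < y -> f x < f y) /\
  (forall x, inI x -> forall eps, 0 < eps -> exists delta, 0 < delta /\
      forall y, inI y -> Rabs (y - x) < delta -> Rabs (f y - f x) < eps).

(** (F, G) is a lift to R of an element of Homeo_+(S^1), S^1 = R/Z:
    F is a continuous strictly increasing bijection of R commuting with
    the unit translation, G its inverse.  Every element of Homeo_+(S^1)
    has such a lift, unique up to integer translations. *)
Definition is_lift_homeo_plus_S1 (F G : R -> R) : Prop :=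
  continuity F /\
  (forall x y, x < y -> F x < F y) /\
  (forall x, F (x + 1) = F x + 1) /\
  (forall x, G (F x) = x) /\
  (forall x, F (G x) = x).

(** x projects to a fixed point of the circle map lifted by F. *)
Definition liftFix (F : R -> R) (x : R) : Prop :=
  exists k : Z, F x = x + IZR k.

Definition zpow (f g : R -> R) (n : Z) : R -> R :=
  fun x => match n with
           | Z0 => x
           | Zpos p => Nat.iter (Pos.to_nat p) f x
           | Zneg p => Nat.iter (Pos.to_nat p) g x
           end.

Definition is_interval (J : R -> Prop) : Prop :=
  forall x y z, J x -> J y -> x <= z <= y -> J z.

Definition nontrivial (J : R -> Prop) : Prop :=
  exists x y, J x /\ J y /\ x < y.

(* Main.v *)
Require Import Defs.
From Stdlib Require Import Reals ZArith Lia Lra Classical.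
Open Scope R_scope.

Definition H (D : R -> Prop) (f g : R -> R) : Prop :=
  (forall x, D x -> D (f x)) /\ (forall x, D x -> D (g x)) /\
  (forall x, D x -> g (f x) = x) /\ (forall x, D x -> f (g x) = x) /\
  (forall x y, D x -> D y -> x < y -> f x < f y).

Lemma H_sym D f g : H D f g -> H D g f.
Proof.
  intros (h1&h2&h3&h4&h5). repeat split; auto.
  intros x y Dx Dy xy.
  destruct (Rtotal_order (g x) (g y)) as [?|[E|E]]; auto.
  - apply (f_equal f) in E. rewrite !h4 in E; auto. lra.
  - apply h5 in E; auto. rewrite !h4 in E; auto. lra.
Qed.

Lemma H_wmono D f g : H D f g -> forall x y, D x -> D y -> x <= y -> f x <= f y.
Proof.
  intros (h1&h2&h3&h4&h5) x y Dx Dy xy. destruct xy as [xy|<-].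
  - left; auto.
  - lra.
Qed.

Lemma iter_D D f g : H D f g -> forall n x, D x -> D (Nat.iter n f x).
Proof. intros (h1&_) n; induction n; simpl; auto. Qed.

Lemma zpow_alt (f g : R -> R) k x : zpow f g k x =
  if (0 <=? k)%Z then Nat.iter (Z.to_nat k) f x else Nat.iter (Z.to_nat (- k)) g x.
Proof. destruct k; reflexivity. Qed.

Lemma zpow_D D f g : H D f g -> forall n x, D x -> D (zpow f g n x).
Proof.
  intros h n x Dx. rewrite zpow_alt. destruct (0 <=? n)%Z.
  - apply (iter_D D f g h); auto.
  - apply (iter_D D g f (H_sym _ _ _ h)); auto.
Qed.

Lemma iter_fix (f : R -> R) n x : f x = x -> Nat.iter n f x = x.
Proof. intros e; induction n; simpl; auto. rewrite IHn; auto. Qed.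

Lemma zpow_fix D f g : H D f g -> forall n x, D x -> f x = x -> zpow f g n x = x.
Proof.
  intros h n x Dx e. assert (g x = x).
  { destruct h as (_&_&h3&_). rewrite <- e at 1. auto. }
  rewrite zpow_alt. destruct (0 <=? n)%Z; apply iter_fix; auto.
Qed.

Lemma zpow_step D f g : H D f g -> forall k x, D x ->
  zpow f g (k + 1) x = f (zpow f g k x).
Proof.
  intros h k x Dx. pose proof h as (h1&h2&h3&h4&h5). rewrite !zpow_alt.
  destruct (Z.leb_spec 0 k).
  - destruct (Z.leb_spec 0 (k+1)); [|lia].
    replace (Z.to_nat (k+1)) with (S (Z.to_nat k)) by lia. reflexivity.
  - destruct (Z.leb_spec 0 (k+1)).
    + assert (k = -1)%Z by lia. subst. simpl. symmetry; auto.
    + replace (Z.to_nat (-k)) with (S (Z.to_nat (-(k+1)))) by lia. simpl.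
      rewrite h4; auto. apply (iter_D D g f (H_sym _ _ _ h)); auto.
Qed.

Lemma zpow_stepm D f g : H D f g -> forall k x, D x ->
  zpow f g (k - 1) x = g (zpow f g k x).
Proof.
  intros h k x Dx. pose proof h as (h1&h2&h3&h4&h5).
  replace k with ((k-1)+1)%Z at 2 by lia. rewrite (zpow_step D f g h); auto.
  rewrite h3; auto. apply (zpow_D D f g h); auto.
Qed.

Lemma zpow_add D f g : H D f g -> forall i j x, D x ->
  zpow f g (i + j) x = zpow f g i (zpow f g j x).
Proof.
  intros h i j x Dx. pattern i. apply Z.peano_ind.
  - reflexivity.
  - intros n IH. replace (Z.succ n + j)%Z with ((n + j) + 1)%Z by lia.
    unfold Z.succ. rewrite !(zpow_step D f g h); auto.
    + rewrite IH; auto.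
    + apply (zpow_D D f g h); auto.
  - intros n IH. replace (Z.pred n + j)%Z with ((n + j) - 1)%Z by lia.
    unfold Z.pred. replace (n + -1)%Z with (n - 1)%Z by lia.
    rewrite !(zpow_stepm D f g h); auto.
    + rewrite IH; auto.
    + apply (zpow_D D f g h); auto.
Qed.

Lemma zpow_nat (f g : R -> R) n x : zpow f g (Z.of_nat n) x = Nat.iter n f x.
Proof. rewrite zpow_alt. destruct (Z.leb_spec 0 (Z.of_nat n)); [|lia].
  rewrite Nat2Z.id. auto. Qed.

Lemma zpow_natm (f g : R -> R) n x : zpow f g (- Z.of_nat n) x = Nat.iter n g x.
Proof. rewrite zpow_alt. destruct (Z.leb_spec 0 (- Z.of_nat n)).
  - assert (n = 0%nat) by lia. subst. reflexivity.
  - rewrite Z.opp_involutive, Nat2Z.id. auto. Qed.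

Lemma iter_gt D f g : H D f g -> forall z, D z -> z < f z ->
  forall n, z < Nat.iter (S n) f z.
Proof.
  intros h z Dz lt n. pose proof h as (h1&h2&h3&h4&h5). induction n.
  - exact lt.
  - change (z < f (Nat.iter (S n) f z)).
    apply Rlt_trans with (f z); auto. apply h5; auto. apply (iter_D D f g h); auto.
Qed.

Lemma iter_lt D f g : H D f g -> forall z, D z -> f z < z ->
  forall n, Nat.iter (S n) f z < z.
Proof.
  intros h z Dz lt n. pose proof h as (h1&h2&h3&h4&h5). induction n.
  - exact lt.
  - change (f (Nat.iter (S n) f z) < z).
    apply Rlt_trans with (f z); auto. apply h5; auto. apply (iter_D D f g h); auto.
Qed.

Lemma inv_lt D f g : H D f g -> forall z, D z -> z < f z -> g z < z.
Proof.
  intros h z Dz lt. pose proof h as (h1&h2&h3&h4&h5).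
  destruct (Rtotal_order (g z) z) as [?|[E|E]]; auto.
  - apply (f_equal f) in E. rewrite h4 in E; auto. lra.
  - apply h5 in E; auto. rewrite h4 in E; auto. lra.
Qed.

Lemma inv_gt D f g : H D f g -> forall z, D z -> f z < z -> z < g z.
Proof.
  intros h z Dz lt. pose proof h as (h1&h2&h3&h4&h5).
  destruct (Rtotal_order (g z) z) as [E|[E|E]]; auto.
  - apply h5 in E; auto. rewrite h4 in E; auto. lra.
  - apply (f_equal f) in E. rewrite h4 in E; auto. lra.
Qed.

Lemma nonfix D f g : H D f g -> forall z k, D z -> f z <> z -> zpow f g k z = z -> k = 0%Z.
Proof.
  intros h z k Dz ne e. pose proof (H_sym _ _ _ h) as h'.
  rewrite zpow_alt in e.
  destruct (Z.leb_spec 0 k); destruct (Z.eq_dec k 0); auto; exfalso.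
  - replace (Z.to_nat k) with (S (Z.to_nat k - 1)) in e by lia.
    destruct (Rtotal_order z (f z)) as [lt|[E|lt]]; [| congruence |].
    + pose proof (iter_gt D f g h z Dz lt (Z.to_nat k - 1)). lra.
    + pose proof (iter_lt D f g h z Dz lt (Z.to_nat k - 1)). lra.
  - replace (Z.to_nat (-k)) with (S (Z.to_nat (-k) - 1)) in e by lia.
    destruct (Rtotal_order z (f z)) as [lt|[E|lt]]; [| congruence |].
    + pose proof (iter_lt D g f h' z Dz (inv_lt D f g h z Dz lt) (Z.to_nat (-k) - 1)). lra.
    + pose proof (iter_gt D g f h' z Dz (inv_gt D f g h z Dz lt) (Z.to_nat (-k) - 1)). lra.
Qed.

Lemma between1 D f g : H D f g -> forall x0 y, D x0 -> D y -> f x0 = x0 ->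
  x0 <= y -> f y <= y -> forall n, x0 <= Nat.iter n f y <= y.
Proof.
  intros h x0 y D0 Dy e0 l1 l2 n. pose proof h as (h1&h2&h3&h4&h5).
  induction n; simpl; [lra|].
  assert (Dn := iter_D D f g h n y Dy).
  split.
  - rewrite <- e0 at 1. apply (H_wmono D f g h); tauto.
  - apply Rle_trans with (f y); auto. apply (H_wmono D f g h); tauto.
Qed.

Lemma between2 D f g : H D f g -> forall x0 y, D x0 -> D y -> f x0 = x0 ->
  y <= x0 -> y <= f y -> forall n, y <= Nat.iter n f y <= x0.
Proof.
  intros h x0 y D0 Dy e0 l1 l2 n. pose proof h as (h1&h2&h3&h4&h5).
  induction n; simpl; [lra|].
  assert (Dn := iter_D D f g h n y Dy).
  split.
  - apply Rle_trans with (f y); auto. apply (H_wmono D f g h); tauto.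
  - rewrite <- e0. apply (H_wmono D f g h); tauto.
Qed.
Lemma orbit D f g J x0 y : H D f g -> is_interval J -> (forall x, J x -> D x) ->
  J x0 -> J y -> f x0 = x0 -> f y <> y ->
  exists s, (s = 1 \/ s = -1)%Z /\ forall t, (0 <= t)%Z -> J (zpow f g (s*t) y).
Proof.
  intros h hJ JD J0 Jy e0 ne.
  pose proof (H_sym _ _ _ h) as h'. pose proof h as (h1&h2&h3&h4&h5).
  assert (D0 : D x0) by auto. assert (Dy : D y) by auto.
  assert (g0 : g x0 = x0) by (rewrite <- e0 at 1; auto).
  destruct (Rle_dec x0 y) as [l|l];
  destruct (Rtotal_order (f y) y) as [lt|[E|lt]]; try congruence.
  - exists 1%Z. split; auto. intros t ht.
    replace (1*t)%Z with (Z.of_nat (Z.to_nat t)) by lia. rewrite zpow_nat.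
    pose proof (between1 D f g h x0 y D0 Dy e0 l (Rlt_le _ _ lt) (Z.to_nat t)).
    apply (hJ x0 y); auto.
  - exists (-1)%Z. split; auto. intros t ht.
    replace (-1*t)%Z with (- Z.of_nat (Z.to_nat t))%Z by lia. rewrite zpow_natm.
    pose proof (between1 D g f h' x0 y D0 Dy g0 l (Rlt_le _ _ (inv_lt D f g h y Dy lt)) (Z.to_nat t)).
    apply (hJ x0 y); auto.
  - exists (-1)%Z. split; auto. intros t ht.
    replace (-1*t)%Z with (- Z.of_nat (Z.to_nat t))%Z by lia. rewrite zpow_natm.
    pose proof (between2 D g f h' x0 y D0 Dy g0 (Rlt_le _ _ (Rnot_le_lt _ _ l)) (Rlt_le _ _ (inv_gt D f g h y Dy lt)) (Z.to_nat t)).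
    apply (hJ y x0); auto.
  - exists 1%Z. split; auto. intros t ht.
    replace (1*t)%Z with (Z.of_nat (Z.to_nat t)) by lia. rewrite zpow_nat.
    pose proof (between2 D f g h x0 y D0 Dy e0 (Rlt_le _ _ (Rnot_le_lt _ _ l)) (Rlt_le _ _ lt) (Z.to_nat t)).
    apply (hJ y x0); auto.
Qed.

Lemma generic D a ai b bi n1 n2 n3 m1 m2 m3 k J :
  H D a ai -> H D b bi -> (m1 + m2 <> m3)%Z ->
  (forall x, D x -> zpow a ai n1 (zpow b bi m3 (zpow a ai n2 x)) =
     zpow b bi m1 (zpow a ai n3 (zpow b bi m2 x)) + IZR k) ->
  is_interval J -> (forall x, J x -> D x /\ a x = x) ->
  (forall x, J x -> b x = x) \/ (forall x, J x -> b x <> x).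
Proof.
  intros ha hb hm rel hJ hJa.
  destruct (classic (exists x0, J x0 /\ b x0 = x0)) as [[x0 [J0 e0]]|nx].
  2: { right. intros x Jx e. apply nx; eauto. }
  left. intros y Jy. apply NNPP. intro ne.
  assert (JD : forall x, J x -> D x) by (intros; apply hJa; auto).
  assert (afix : forall n w, J w -> zpow a ai n w = w).
  { intros n w Jw. apply (zpow_fix D a ai ha); apply hJa; auto. }
  assert (k0 : k = 0%Z).
  { pose proof (rel x0 (JD _ J0)) as r.
    rewrite (afix n2 x0 J0), (zpow_fix D b bi hb m3 x0 (JD _ J0) e0), (afix n1 x0 J0),
      (zpow_fix D b bi hb m2 x0 (JD _ J0) e0), (afix n3 x0 J0),
      (zpow_fix D b bi hb m1 x0 (JD _ J0) e0) in r.
    apply eq_IZR. lra. }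
  subst k.
  destruct (orbit D b bi J x0 y hb hJ JD J0 Jy e0 ne) as [s [hs hO]].
  set (N := (Z.abs m2 + Z.abs m3)%Z).
  set (z := zpow b bi (s * N) y).
  assert (Jz : J z) by (apply hO; lia).
  assert (Dy := JD _ Jy).
  assert (hz : forall m, (Z.abs m <= N)%Z -> J (zpow b bi m z)).
  { intros m hm'. unfold z. rewrite <- (zpow_add D b bi hb); auto.
    replace (m + s * N)%Z with (s * (s * m + N))%Z by (destruct hs; subst; lia).
    apply hO. destruct hs; subst; lia. }
  assert (J2 : J (zpow b bi m2 z)) by (apply hz; lia).
  assert (J3 : J (zpow b bi m3 z)) by (apply hz; lia).
  pose proof (rel z (JD _ Jz)) as r.
  rewrite (afix n2 z Jz), (afix n1 _ J3), (afix n3 _ J2), Rplus_0_r in r.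
  rewrite <- (zpow_add D b bi hb) in r by auto.
  apply (f_equal (zpow b bi (- (m1 + m2)))) in r.
  rewrite <- !(zpow_add D b bi hb) in r by auto.
  replace (- (m1 + m2) + (m1 + m2))%Z with 0%Z in r by lia.
  change (zpow b bi 0 z) with z in r.
  assert (nz : b z <> z).
  { intro e. apply ne. unfold z in e.
    change (b (zpow b bi (s*N) y)) with (zpow b bi 1 (zpow b bi (s*N) y)) in e.
    rewrite <- (zpow_add D b bi hb) in e by auto.
    apply (f_equal (zpow b bi (- (s*N)))) in e.
    rewrite <- !(zpow_add D b bi hb) in e by (auto; apply (zpow_D D b bi hb); auto).
    replace (- (s * N) + (1 + s * N))%Z with 1%Z in e by lia.
    replace (- (s * N) + s * N)%Z with 0%Z in e by lia. exact e. }
  pose proof (nonfix D b bi hb z _ (JD _ Jz) nz r). lia.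
Qed.
Lemma liftZ F G : is_lift_homeo_plus_S1 F G -> forall k x, F (x + IZR k) = F x + IZR k.
Proof.
  intros (c&m&p&i1&i2) k. pattern k. apply Z.peano_ind.
  - intros x. rewrite !Rplus_0_r. auto.
  - intros n IH x. unfold Z.succ. rewrite plus_IZR.
    replace (x + (IZR n + 1)) with ((x + IZR n) + 1) by ring. rewrite p, IH. ring.
  - intros n IH x. unfold Z.pred. rewrite plus_IZR.
    pose proof (p (x + (IZR n + IZR (-1)))) as e.
    replace (x + (IZR n + IZR (-1)) + 1) with (x + IZR n) in e by (simpl; ring).
    rewrite IH in e. simpl in *. lra.
Qed.

Lemma liftZi F G : is_lift_homeo_plus_S1 F G -> forall k x, G (x + IZR k) = G x + IZR k.
Proof.
  intros h k x. pose proof h as (c&m&p&i1&i2).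
  rewrite <- (i2 x) at 1. rewrite <- (liftZ F G h). apply i1.
Qed.

Definition nF (F : R -> R) (c : Z) := fun x => F x - IZR c.
Definition nG (G : R -> R) (c : Z) := fun x => G (x + IZR c).

Lemma H_lift F G c : is_lift_homeo_plus_S1 F G -> H (fun _ => True) (nF F c) (nG G c).
Proof.
  intros h. pose proof h as (co&m&p&i1&i2). unfold nF, nG.
  repeat split; auto.
  - intros x _. replace (F x - IZR c + IZR c) with (F x) by ring. auto.
  - intros x _. rewrite i2. ring.
  - intros x y _ _ l. apply m in l. lra.
Qed.

Lemma iter_shift (F : R -> R) (hF : forall k x, F (x + IZR k) = F x + IZR k) :
  forall n t x, Nat.iter n F (x + IZR t) = Nat.iter n F x + IZR t.
Proof. induction n; intros; simpl; auto. rewrite IHn, hF. auto. Qed.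

Lemma zpow_shift F G : is_lift_homeo_plus_S1 F G ->
  forall n t x, zpow F G n (x - IZR t) = zpow F G n x - IZR t.
Proof.
  intros h n t x. replace (x - IZR t) with (x + IZR (-t)) by (rewrite opp_IZR; ring).
  replace (zpow F G n x - IZR t) with (zpow F G n x + IZR (-t)) by (rewrite opp_IZR; ring).
  destruct n; simpl; auto; apply iter_shift.
  - apply (liftZ F G h).
  - apply (liftZi F G h).
Qed.

Lemma zpow_norm F G c : is_lift_homeo_plus_S1 F G ->
  forall n x, zpow (nF F c) (nG G c) n x = zpow F G n x - IZR (n * c).
Proof.
  intros h n x.
  assert (E1 : forall p x, Nat.iter p (nF F c) x = Nat.iter p F x - IZR (Z.of_nat p * c)).
  { induction p; intros y. { simpl; ring. } rewrite !Nat.iter_succ.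
    rewrite IHp. unfold nF. replace (Nat.iter p F y - IZR (Z.of_nat p * c))
      with (Nat.iter p F y + IZR (- (Z.of_nat p * c))) by (rewrite opp_IZR; ring).
    rewrite (liftZ F G h). rewrite Nat2Z.inj_succ, Z.mul_succ_l, plus_IZR, opp_IZR. ring. }
  assert (E2 : forall p x, Nat.iter p (nG G c) x = Nat.iter p G x + IZR (Z.of_nat p * c)).
  { induction p; intros y. { simpl; ring. } rewrite !Nat.iter_succ.
    rewrite IHp. unfold nG. rewrite Rplus_assoc, <- plus_IZR, (liftZi F G h).
    rewrite Nat2Z.inj_succ, Z.mul_succ_l. f_equal. }
  destruct n; unfold zpow; cbv beta iota.
  - simpl; ring.
  - rewrite E1, positive_nat_Z. auto.
  - rewrite E2, positive_nat_Z. replace (Z.neg p * c)%Z with (- (Z.pos p * c))%Z by lia.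
    rewrite opp_IZR. ring.
Qed.

Lemma fix_char F G k0 x0 : is_lift_homeo_plus_S1 F G -> F x0 = x0 + IZR k0 ->
  forall x, liftFix F x <-> nF F k0 x = x.
Proof.
  intros h e0 x. pose proof h as (co&m&p&i1&i2).
  assert (bd : forall x, -1 < nF F k0 x - x < 1).
  { intros y. unfold nF. destruct (base_Int_part (y - x0)) as [b1 b2].
    set (n := Int_part (y - x0)) in *.
    set (y' := y + IZR (- n)).
    assert (F y' = F y + IZR (-n)) by apply (liftZ F G h).
    rewrite opp_IZR in *.
    assert (l1 : x0 <= y') by (unfold y'; rewrite opp_IZR; lra).
    assert (l2 : y' < x0 + 1) by (unfold y'; rewrite opp_IZR; lra).
    assert (F x0 <= F y') by (destruct l1 as [l1|l1]; [left; auto| rewrite l1; lra]).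
    assert (F y' < F (x0 + 1)) by auto. rewrite p in *. unfold y' in *. lra. }
  split.
  - intros [k ek]. pose proof (bd x) as b. unfold nF in *. rewrite ek in *.
    assert (b1 : IZR (-1) < IZR (k - k0)) by (rewrite minus_IZR; simpl; lra).
    assert (b2 : IZR (k - k0) < IZR 1) by (rewrite minus_IZR; simpl; lra).
    apply lt_IZR in b1. apply lt_IZR in b2. assert (k = k0) by lia. subst. lra.
  - intros e. exists k0. unfold nF in e. lra.
Qed.

Theorem lemma3p7 :
  (* Case 1: a, b in Homeo_+(I) *)
  (forall (a ai b bi : R -> R) (n1 n2 n3 m1 m2 m3 : Z),
     is_homeo_plus_I a ai -> is_homeo_plus_I b bi ->
     (m1 + m2 <> m3)%Z ->
     (forall x, inI x ->
        zpow a ai n1 (zpow b bi m3 (zpow a ai n2 x)) =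
        zpow b bi m1 (zpow a ai n3 (zpow b bi m2 x))) ->
     forall J : R -> Prop,
       is_interval J -> nontrivial J ->
       (forall x, J x -> inI x /\ a x = x) ->
       (forall x, J x -> b x = x) \/ (forall x, J x -> b x <> x))
  /\
  (* Case 2: a, b in Homeo_+(S^1), each with a fixed point, given by lifts *)
  (forall (A Ai B Bi : R -> R) (n1 n2 n3 m1 m2 m3 : Z),
     is_lift_homeo_plus_S1 A Ai -> is_lift_homeo_plus_S1 B Bi ->
     (exists x, liftFix A x) -> (exists x, liftFix B x) ->
     (m1 + m2 <> m3)%Z ->
     (exists k : Z, forall x,
        zpow A Ai n1 (zpow B Bi m3 (zpow A Ai n2 x)) =
        zpow B Bi m1 (zpow A Ai n3 (zpow B Bi m2 x)) + IZR k) ->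
     forall K : R -> Prop,
       is_interval K -> nontrivial K ->
       (forall x, K x -> liftFix A x) ->
       (forall x, K x -> liftFix B x) \/ (forall x, K x -> ~ liftFix B x)).
Proof.
  split.
  - intros a ai b bi n1 n2 n3 m1 m2 m3 ha hb hm rel J hJ _ hJa.
    destruct ha as (a1&a2&a3&a4&a5&_). destruct hb as (b1&b2&b3&b4&b5&_).
    apply (generic inI a ai b bi n1 n2 n3 m1 m2 m3 0%Z J); auto.
    + exact (conj a1 (conj a2 (conj a3 (conj a4 a5)))).
    + exact (conj b1 (conj b2 (conj b3 (conj b4 b5)))).
    + intros x Ix. rewrite Rplus_0_r. auto.
  - intros A Ai B Bi n1 n2 n3 m1 m2 m3 hA hB [xa [ka ea]] [xb [kb eb]] hm [k rel]
      K hK _ hKa.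
    assert (hr : forall x, True ->
      zpow (nF A ka) (nG Ai ka) n1 (zpow (nF B kb) (nG Bi kb) m3 (zpow (nF A ka) (nG Ai ka) n2 x)) =
      zpow (nF B kb) (nG Bi kb) m1 (zpow (nF A ka) (nG Ai ka) n3 (zpow (nF B kb) (nG Bi kb) m2 x))
      + IZR (k - n2*ka - m3*kb - n1*ka + m2*kb + n3*ka + m1*kb)).
    { intros x _. rewrite !(zpow_norm A Ai ka hA), !(zpow_norm B Bi kb hB).
      repeat (rewrite (zpow_shift A Ai hA) || rewrite (zpow_shift B Bi hB)).
      rewrite rel. rewrite !plus_IZR, !minus_IZR. ring. }
    destruct (generic (fun _ => True) (nF A ka) (nG Ai ka) (nF B kb) (nG Bi kb)
      n1 n2 n3 m1 m2 m3 _ K (H_lift A Ai ka hA) (H_lift B Bi kb hB) hm hr hK)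
      as [L|L].
    + intros x Kx. split; auto. apply (fix_char A Ai ka xa hA ea). auto.
    + left. intros x Kx. apply (fix_char B Bi kb xb hB eb). auto.
    + right. intros x Kx F. apply (L x Kx). apply (fix_char B Bi kb xb hB eb). auto.
Qed.
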